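(* Let $C\subseteq\mathbb{F}_q^n$ be a linear code and $(A,B)$ a $2$-power $t$-error locating pair for $C$. Let $\mathbf{y}=\mathbf{c}+\mathbf{e}$ with $\mathbf{c}\in C$, $\mathrm{w}(\mathbf{e})=t$, $I_{\mathbf{e}}=\mathrm{supp}(\mathbf{e})$, and $M=M_1\cap M_2$ with $M_1=\{\mathbf{a}\in A\mid \langle \mathbf{a}*\mathbf{y},\mathbf{b}\rangle=0\ \forall \mathbf{b}\in B\}$, $M_2=\{\mathbf{a}\in A\mid \langle \mathbf{a}*\mathbf{y}^2,\mathbf{v}\rangle=0\ \forall \mathbf{v}\in (B^{\perp}*C)^{\perp}\}$. The following are equivalent: (i) $M=A(I_{\mathbf{e}})$; (ii) $M(I_{\mathbf{e}})=M$; (iii) $M_{I_{\mathbf{e}}}=\{0\}$.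
   Context: All codes are $\mathbb{F}_q$-linear subspaces of $\mathbb{F}_q^n$. $\mathbf{u}*\mathbf{v}=(u_1v_1,\dots,u_nv_n)$, $\mathbf{u}^i=(u_1^i,\dots,u_n^i)$; $A*B$ is the span of all $\mathbf{a}*\mathbf{b}$; $\langle\mathbf{u},\mathbf{v}\rangle=\sum_iu_iv_i$, $X^\perp$ the dual. $\mathrm{w}$ Hamming weight, $\mathrm{d}$ minimum distance. For $J=\{j_1<\dots<j_s\}$, $\mathbf{x}_J=(x_{j_1},\dots,x_{j_s})$, $X_J=\{\mathbf{x}_J:\mathbf{x}\in X\}\subseteq\mathbb{F}_q^{|J|}$ (puncturing, keeping the coordinates in $J$), and $X(J)=\{\mathbf{x}\in X:\mathbf{x}_J=\mathbf{0}\}\subseteq\mathbb{F}_q^n$. A pair $(A,B)$ is a $2$-power $t$-error locating pair for $C$ if: (1) $A*B\subseteq C^\perp$; (2) $\dim A>t$; (3) $\mathrm{d}(A^\perp)>t$; (4) $\mathrm{d}(A)+\mathrm{d}(C)>n$; (5) $\dim B+\dim (B^\perp*C)^\perp\ge t$. *)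

(* Defs.v *)
From HB Require Import structures.
From mathcomp Require Import all_boot all_order all_algebra.
Set Implicit Arguments. Unset Strict Implicit. Unset Printing Implicit Defensive.
Import GRing.Theory.
Local Open Scope ring_scope.

Section Codes.
Variables (F : finFieldType) (n : nat).
Local Notation vec := 'rV[F]_n.

Definition elems (X : {vspace vec}) : seq vec := [seq x <- enum vec | x \in X].

Definition star (u v : vec) : vec := \row_i (u 0 i * v 0 i).

Definition star_code (A B : {vspace vec}) : {vspace vec} :=
  <<[seq star a b | a <- elems A, b <- elems B]>>%VS.

Definition dot (u v : vec) : F := \sum_i u 0 i * v 0 i.

(* dual code X^perp (span of all vectors orthogonal to X, which is that set) *)
Definition dual (X : {vspace vec}) : {vspace vec} :=
  <<[seq u <- enum vec | [forall x : vec, (x \in X) ==> (dot u x == 0%R)]]>>%VS.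

Definition supp (u : vec) : {set 'I_n} := [set i | u 0 i != 0].
Definition wt (u : vec) : nat := #|supp u|.

(* minimum distance; convention: the zero code has distance n+1 *)
Definition mindist (X : {vspace vec}) : nat :=
  \big[minn/n.+1]_(x : vec | (x \in X) && (x != 0%R)) wt x.

(* x_J : keep coordinates in J (in increasing order) *)
Definition punct (J : {set 'I_n}) (x : vec) : 'rV[F]_#|J| :=
  \row_(k < #|J|) x 0 (enum_val k).

Definition punctured (X : {vspace vec}) (J : {set 'I_n}) : {vspace 'rV[F]_#|J|} :=
  <<[seq punct J x | x <- elems X]>>%VS.

Definition shortened (X : {vspace vec}) (J : {set 'I_n}) : {vspace vec} :=
  <<[seq x <- elems X | punct J x == 0%R]>>%VS.

Definition is_2power_ELP (C A B : {vspace vec}) (t : nat) : Prop :=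
  [/\ (star_code A B <= dual C)%VS,
      (t < \dim A)%N,
      (t < mindist (dual A))%N,
      (n < mindist A + mindist C)%N &
      (t <= \dim B + \dim (dual (star_code (dual B) C)))%N].

Definition M1 (A B : {vspace vec}) (y : vec) : {vspace vec} :=
  <<[seq a <- elems A | [forall b : vec, (b \in B) ==> (dot (star a y) b == 0%R)]]>>%VS.

Definition M2 (C A B : {vspace vec}) (y : vec) : {vspace vec} :=
  <<[seq a <- elems A | [forall v : vec,
       (v \in dual (star_code (dual B) C)) ==> (dot (star a (star y y)) v == 0%R)]]>>%VS.

End Codes.

(* Main.v *)
Require Import Defs.
From mathcomp Require Import all_boot all_order all_algebra.
Import GRing.Theory.
Local Open Scope ring_scope.

Lemma span_kill (K : fieldType) (V : vectType K) (f : V -> K)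
  (hf : forall k u v, f (k *: u + v) = k * f u + f v) (s : seq V) :
  (forall u, u \in s -> f u = 0) -> forall v, v \in <<s>>%VS -> f v = 0.
Proof.
move=> H v /(@coord_span _ _ _ (in_tuple s)) ->.
have f0 : f 0 = 0.
  have := hf 1 0 0; rewrite scaler0 addr0 mul1r => h.
  by apply/(addrI (f 0)); rewrite addr0 -h.
elim/big_rec: _ => [//|i x _ IH].
rewrite hf IH.
by rewrite H ?mulr0 ?addr0 // mem_nth.
Qed.

Section S.
Context {F : finFieldType} {n : nat}.
Local Notation vec := 'rV[F]_n.

Lemma in_elems (X : {vspace vec}) x : (x \in elems X) = (x \in X).
Proof. by rewrite /elems mem_filter mem_enum andbT. Qed.

Lemma span_filter_sub (X : {vspace vec}) (P : pred vec) :
  (<<[seq x <- elems X | P x]>> <= X)%VS.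
Proof. by apply/span_subvP => x; rewrite mem_filter in_elems => /andP[]. Qed.

Lemma in_span_filter (X : {vspace vec}) (P : pred vec) x :
  x \in X -> P x -> x \in <<[seq x <- elems X | P x]>>%VS.
Proof. by move=> h1 h2; apply: memv_span; rewrite mem_filter in_elems h1 h2. Qed.

Lemma dot_lin x k (u v : vec) : dot (k *: u + v) x = k * dot u x + dot v x.
Proof.
rewrite /dot mulr_sumr -big_split /=; apply: eq_bigr => i _.
by rewrite !mxE mulrDl mulrA.
Qed.

Lemma dotC (u v : vec) : dot u v = dot v u.
Proof. by rewrite /dot; apply: eq_bigr => i _; rewrite mulrC. Qed.

Lemma dualP (X : {vspace vec}) u x : u \in dual X -> x \in X -> dot u x = 0.
Proof.
move=> hu hx; apply: (@span_kill _ _ (fun u => dot u x)) hu.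
  by move=> k a b; apply: dot_lin.
move=> w; rewrite mem_filter => /andP[/forallP H _].
by move/implyP: (H x) => /(_ hx) /eqP.
Qed.

Lemma in_dual (X : {vspace vec}) u : (forall x, x \in X -> dot u x = 0) -> u \in dual X.
Proof.
move=> H; apply: memv_span; rewrite mem_filter mem_enum andbT.
by apply/forallP => x; apply/implyP => hx; rewrite H.
Qed.

Lemma dot_star (u v w : vec) : dot (star u v) w = dot v (star u w).
Proof.
rewrite /dot; apply: eq_bigr => i _; rewrite !mxE.
by rewrite [u 0 i * _]mulrC mulrA.
Qed.

Lemma in_star_code (A B : {vspace vec}) a b : a \in A -> b \in B -> star a b \in star_code A B.
Proof. by move=> ha hb; apply: memv_span; apply: allpairs_f; rewrite in_elems. Qed.

Lemma punct0P (J : {set 'I_n}) (x : vec) :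
  punct J x = 0 <-> (forall j, j \in J -> x 0 j = 0).
Proof.
split.
  move=> H j hj; move/rowP: H => /(_ (enum_rank_in hj j)).
  by rewrite !mxE enum_rankK_in.
move=> H; apply/rowP => k; rewrite !mxE; apply: H; exact: enum_valP.
Qed.

Lemma shortP (X : {vspace vec}) J x :
  x \in shortened X J <-> (x \in X /\ forall j, j \in J -> x 0 j = 0).
Proof.
split.
  move=> hx; split; first exact: (subvP (span_filter_sub X (fun x => punct J x == 0)) x hx).
  move=> j hj; apply: (@span_kill _ _ (fun v : vec => v 0 j)) hx.
    by move=> k a b; rewrite !mxE.
  move=> w; rewrite mem_filter => /andP[/eqP /punct0P H _]; exact: H.
by move=> [h1 h2]; apply: in_span_filter => //; apply/eqP/punct0P.
Qed.

Lemma punctP (X : {vspace vec}) J :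
  punctured X J = 0%VS <-> (forall x, x \in X -> punct J x = 0).
Proof.
split.
  move=> H x hx; apply/eqP; rewrite -memv0 -H; apply: memv_span.
  by apply: map_f; rewrite in_elems.
move=> H; apply: subv_anti; rewrite sub0v andbT.
apply/span_subvP => w /mapP [x]; rewrite in_elems => hx ->.
by rewrite H // memv0.
Qed.

End S.
Arguments dualP {F n X u x}.

Theorem lemma3p7 (F : finFieldType) (n t : nat) (C A B : {vspace 'rV[F]_n})
  (c e : 'rV[F]_n) :
  is_2power_ELP C A B t -> c \in C -> wt e = t ->
  let y := c + e in
  let Ie := supp e in
  let M := (M1 A B y :&: M2 C A B y)%VS in
  (M = shortened A Ie <-> shortened M Ie = M) /\
  (shortened M Ie = M <-> punctured M Ie = 0%VS).
Proof.
move=> [hAB _ _ _ _] hc _ y Ie M.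
have MA : (M <= A)%VS.
  apply: subv_trans (capvSl _ _) _; exact: span_filter_sub.
have sub : (shortened A Ie <= M)%VS.
  apply/subvP => a /shortP [ha hz].
  have ae : forall j, a 0 j * e 0 j = 0.
    move=> j; case: (boolP (j \in Ie)) => hj; first by rewrite hz // mul0r.
    by move: hj; rewrite /Ie /supp inE negbK => /eqP ->; rewrite mulr0.
  have ay : star a y = star a c.
    by apply/rowP => j; rewrite !mxE mulrDr ae addr0.
  have ayy : star a (star y y) = star (star a c) c.
    apply/rowP => j; rewrite /y !mxE mulrA [a 0 j * _]mulrDr ae addr0.
    by rewrite mulrDr -[a 0 j * c 0 j * e 0 j]mulrA [c 0 j * e 0 j]mulrC mulrA ae mul0r addr0.
  have acB : star a c \in dual B.
    apply: in_dual => b hb; rewrite dot_star dotC.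
    apply: (dualP _ hc); apply: (subvP hAB); exact: in_star_code.
  rewrite memv_cap; apply/andP; split; apply: in_span_filter => //;
    apply/forallP => v; apply/implyP => hv; apply/eqP.
    by rewrite ay; apply: (dualP acB hv).
  rewrite ayy dotC; apply: (dualP hv); exact: in_star_code.
split.
  split.
    move=> H; apply/vspaceP => x; apply/idP/idP.
      by move/shortP => [].
    move=> hx; apply/shortP; split => //.
    by move: hx; rewrite {1}H => /shortP [].
  move=> H; apply: subv_anti; rewrite sub andbT.
  apply/subvP => x; rewrite -{1}H => /shortP [hx hz].
  apply/shortP; split => //; exact: (subvP MA).
split.
  move=> H; apply/punctP => x; rewrite -H => /shortP [_ hz].
  by apply/punct0P.
move=> /punctP H; apply/vspaceP => x; apply/idP/idP.
  by move/shortP => [].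
by move=> hx; apply/shortP; split => //; apply/punct0P; apply: H.
Qed.
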